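(* Let $V$ be a unital JB-algebra, $a$ a projection in $V$ and $u$ a tripotent in $V_{1/2}(a)$. Then: (i) $p:=au^2$ is a projection satisfying $p\le a$, $u\in V_{1/2}(p)$ and $pu^2=p$; (ii) if $u\neq0$ then $p\neq0$; (iii) if $u$ and $v$ are orthogonal tripotents in $V_{1/2}(a)$, then $p:=au^2$ and $q:=av^2$ are orthogonal projections ($pq=0$) and $pv=uq=0$.
   Context: Products are the Jordan product of $V$, written by juxtaposition. The triple product is $\{xyz\}=(xy)z-(zx)y+(yz)x$. A projection is an idempotent $p=p^2$; $p\le a$ is the usual order of projections. A tripotent is $u$ with $\{uuu\}=u$. $V_{1/2}(a)=\{x: ax=\frac12x\}$. Tripotents $u,v$ are orthogonal if $\{uvv\}=0$ (equivalently $\{uuv\}=0$). *)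

(* Defs.v *)
From HB Require Import structures.
From mathcomp Require Import all_boot all_order all_algebra.
From mathcomp Require Import all_classical all_reals all_analysis.
Set Implicit Arguments. Unset Strict Implicit. Unset Printing Implicit Defensive.
Import Order.TTheory GRing.Theory Num.Theory.
Import numFieldNormedType.Exports.
Local Open Scope ring_scope.

Definition is_unital_JB_algebra (R : realType) (V : completeNormedModType R)
  (mul : V -> V -> V) (one : V) : Prop :=
  (forall x y z : V, mul (x + y) z = mul x z + mul y z) /\
      (forall (r : R) (x y : V), mul (r *: x) y = r *: mul x y) /\
      (forall x y : V, mul x y = mul y x) /\
      (forall x y : V, mul (mul x y) (mul x x) = mul x (mul y (mul x x))) /\
      (forall x : V, mul one x = x) /\
      (forall x y : V, `|mul x y| <= `|x| * `|y|) /\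
      (forall x : V, `|mul x x| = `|x| ^+ 2) /\
      (forall x y : V, `|mul x x| <= `|mul x x + mul y y|).

Section JBDefs.
Context (R : realType) (V : completeNormedModType R) (mul : V -> V -> V).

Definition triple (x y z : V) : V :=
  mul (mul x y) z - mul (mul z x) y + mul (mul y z) x.

Definition projection (p : V) : Prop := mul p p = p.

Definition tripotent (u : V) : Prop := triple u u u = u.

(* the usual order of a JB-algebra: y - x lies in the positive cone,
   i.e. is a square *)
Definition jle (x y : V) : Prop := exists z : V, y - x = mul z z.

Definition in_V12 (a x : V) : Prop := mul a x = (2%:R)^-1 *: x.

Definition orthogonal_trip (u v : V) : Prop := triple u v v = 0.
End JBDefs.

(* Main.v *)
Require Import Defs.
From HB Require Import structures.
From mathcomp Require Import all_boot all_order all_algebra.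
From mathcomp Require Import all_classical all_reals all_analysis.
From mathcomp Require Import ring.
Set Implicit Arguments. Unset Strict Implicit. Unset Printing Implicit Defensive.
Import Order.TTheory GRing.Theory Num.Theory.
Import numFieldNormedType.Exports.
Local Open Scope ring_scope.

Section TE.
Variable V : zmodType.
Definition te := (int * V)%type.
HB.instance Definition _ := GRing.Zmodule.on te.
Definition temul (x y : te) : te := (x.1 * y.1, x.2 *~ y.1 + y.2 *~ x.1).
Definition teone : te := (1, 0).
Lemma temulA : associative temul.
Proof. move=> [m x] [n y] [k z]; rewrite /temul /=; congr pair; first by rewrite mulrA.
by rewrite !mulrzDl -!mulrzA addrA [n * k]mulrC [k * m]mulrC [m * n]mulrC. Qed.
Lemma temulC : commutative temul.
Proof. by move=> [m x] [n y]; rewrite /temul /= mulrC addrC. Qed.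
Lemma temul1 : left_id teone temul.
Proof. by move=> [m x]; rewrite /temul /= mul1r mul0rz add0r mulr1z. Qed.
Lemma temulDl : left_distributive temul +%R.
Proof. move=> [m x] [n y] [k z]; rewrite /temul /=; congr pair; first by rewrite mulrDl.
by rewrite mulrzDl mulrzDr addrACA. Qed.
Lemma teone_neq0 : teone != 0.
Proof. by rewrite /teone xpair_eqE oner_eq0. Qed.
HB.instance Definition _ := GRing.Zmodule_isComNzRing.Build te temulA temulC temul1 temulDl teone_neq0.
Definition iota (x : V) : te := (0, x).
Lemma iota_inj : injective iota. Proof. by move=> x y []. Qed.
Lemma iotaD x y : iota (x + y) = iota x + iota y. Proof. by rewrite /iota; congr pair; rewrite addr0. Qed.
Lemma iotaN x : iota (- x) = - iota x. Proof. by rewrite /iota; congr pair; rewrite oppr0. Qed.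
Lemma iotaB x y : iota (x - y) = iota x - iota y. Proof. by rewrite iotaD iotaN. Qed.
Lemma iota0 : iota 0 = 0. Proof. by []. Qed.
Lemma iotaMn x n : iota (x *+ n) = iota x *+ n.
Proof. elim: n => [|n IH]; first by []. by rewrite !mulrS iotaD IH. Qed.
End TE.
Definition iotaE := (iotaD, iotaN, iotaB, iota0, iotaMn).
Ltac vlin := apply: iota_inj; rewrite ?iotaE; ring.

Lemma lc1 (T : comNzRingType) (X L1 R1 : T) k1 : L1 = R1 -> X = k1 * (L1 - R1) -> X = 0.
Proof. by move=> -> ->; rewrite subrr mulr0. Qed.
Lemma lc2 (T : comNzRingType) (X L1 R1 L2 R2 : T) k1 k2 : L1 = R1 -> L2 = R2 ->
  X = k1 * (L1 - R1) + k2 * (L2 - R2) -> X = 0.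
Proof. by move=> -> -> ->; rewrite !subrr !mulr0 addr0. Qed.
Lemma lc3 (T : comNzRingType) (X L1 R1 L2 R2 L3 R3 : T) k1 k2 k3 : L1 = R1 -> L2 = R2 -> L3 = R3 ->
  X = k1 * (L1 - R1) + k2 * (L2 - R2) + k3 * (L3 - R3) -> X = 0.
Proof. by move=> -> -> -> ->; rewrite !subrr !mulr0 !addr0. Qed.
Lemma eq_sub0 (T : zmodType) (x y : T) : x - y = 0 -> x = y.
Proof. by move/eqP; rewrite subr_eq0 => /eqP. Qed.

Section Jordan.
Variables (R : numFieldType) (V : lmodType R) (mul : V -> V -> V).
Hypothesis mulDl : forall x y z, mul (x + y) z = mul x z + mul y z.
Hypothesis mulC : forall x y, mul x y = mul y x.
Hypothesis jor : forall x y, mul (mul x y) (mul x x) = mul x (mul y (mul x x)).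

Ltac solve1 k E := apply: iota_inj; move/(congr1 (@iota _)): E; rewrite !iotaE => E;
  apply: (@lc1 (te V) _ _ _ k E); ring.

Lemma mulDr x y z : mul x (y + z) = mul x y + mul x z.
Proof. by rewrite mulC mulDl !(mulC _ x). Qed.
Lemma mul0l x : mul 0 x = 0.
Proof. by apply: (addIr (mul 0 x)); rewrite -mulDl !add0r. Qed.
Lemma mul0r x : mul x 0 = 0.
Proof. by rewrite mulC mul0l. Qed.
Lemma mulNl x y : mul (- x) y = - mul x y.
Proof. by apply: (addIr (mul x y)); rewrite -mulDl !addNr mul0l. Qed.
Lemma mulNr x y : mul x (- y) = - mul x y.
Proof. by rewrite mulC mulNl mulC. Qed.
Lemma mulMnl x y n : mul (x *+ n) y = mul x y *+ n.
Proof. by elim: n => [|n IH]; rewrite ?mul0l // !mulrS mulDl IH. Qed.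
Lemma mulMnr x y n : mul x (y *+ n) = mul x y *+ n.
Proof. by rewrite mulC mulMnl mulC. Qed.

Lemma torsion (x : V) n : x *+ n.+1 = 0 -> x = 0.
Proof. move=> h; apply/eqP; move: h; rewrite -(scaler_nat (R:=R) n.+1 x) => /eqP; rewrite scaler_eq0 pnatr_eq0 /=; by []. Qed.

Definition T y a b d := mul (mul a y) (mul b d) - mul a (mul y (mul b d)).
Lemma TD1 y a a' b d : T y (a + a') b d = T y a b d + T y a' b d.
Proof. rewrite /T !mulDl; vlin. Qed.
Lemma TD2 y a b b' d : T y a (b + b') d = T y a b d + T y a b' d.
Proof. rewrite /T !(mulDl, mulDr); vlin. Qed.
Lemma TD3 y a b d d' : T y a b (d + d') = T y a b d + T y a b d'.
Proof. rewrite /T !(mulDl, mulDr); vlin. Qed.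
Lemma TN1 y a b d : T y (- a) b d = - T y a b d.
Proof. rewrite /T !(mulNl, mulNr); vlin. Qed.
Lemma TN2 y a b d : T y a (- b) d = - T y a b d.
Proof. rewrite /T !(mulNl, mulNr); vlin. Qed.
Lemma TN3 y a b d : T y a b (- d) = - T y a b d.
Proof. rewrite /T !(mulNl, mulNr); vlin. Qed.
Lemma TC y a b d : T y a b d = T y a d b.
Proof. by rewrite /T (mulC b). Qed.
Lemma TJ y x : T y x x x = 0.
Proof. by rewrite /T jor subrr. Qed.

Lemma lin1 y x z : T y z x x + T y x z x + T y x x z = 0.
Proof.
have E1 := TJ y (x + z); have E2 := TJ y (x - z); have E3 := TJ y z; have E4 := TJ y x.
rewrite !(TD1, TD2, TD3) in E1. rewrite !(TD1, TD2, TD3, TN1, TN2, TN3) in E2.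
apply: (@torsion _ 1); apply: iota_inj.
move/(congr1 (@iota _)): E1; move/(congr1 (@iota _)): E2; move/(congr1 (@iota _)): E3;
move/(congr1 (@iota _)): E4; rewrite !iotaE => E4 E3 E2 E1.
apply: (lc3 (k1 := 1) (k2 := -1) (k3 := -2%:R) E1 E2 E3). ring.
Qed.

Lemma lin2 y x z w : T y z x w + T y x w z + T y w x z = 0.
Proof.
have E1 := lin1 y (x + w) z; have E2 := lin1 y x z; have E3 := lin1 y w z.
rewrite !(TD1, TD2, TD3) (TC y z w x) (TC y x z w) (TC y w z x) in E1.
apply: (@torsion _ 1); apply: iota_inj.
move/(congr1 (@iota _)): E1; move/(congr1 (@iota _)): E2; move/(congr1 (@iota _)): E3;
rewrite !iotaE => E3 E2 E1.
apply: (lc3 (k1 := 1) (k2 := -1) (k3 := -1) E1 E2 E3). ring.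
Qed.

Lemma J2 w z y x : mul (mul (mul w z) y) x = mul (mul z y) (mul w x) + mul (mul w z) (mul y x)
  + mul (mul w y) (mul z x) - mul z (mul y (mul w x)) - mul w (mul y (mul z x)).
Proof.
have := lin2 y x z w; rewrite /T.
rewrite [mul (mul (mul w z) y) x]mulC [mul (mul w z) y]mulC (mulC w x) (mulC z x) (mulC y x).
rewrite [mul (mul w z) (mul x y)]mulC (mulC w z) => E.
apply: eq_sub0; rewrite -oppr0 -E; vlin.
Qed.

Lemma mulnI' (x y : V) n : x *+ n.+1 = y *+ n.+1 -> x = y.
Proof. by move=> h; apply: eq_sub0; apply: (@torsion _ n); rewrite mulrnBl h subrr. Qed.

Lemma factsI c u : mul c c = c *+ 2 -> mul c u = u -> mul (mul u u) u = u ->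
  [/\ mul c (mul (mul u u) c) = mul (mul u u) c *+ 2, mul (mul (mul u u) c) u = u,
      mul (mul (mul u u) c) (mul u u) = mul (mul u u) c
    & mul (mul (mul u u) c) (mul (mul u u) c) = mul (mul u u) c *+ 2].
Proof.
move=> hcc hcu hu3.
have huc : mul u c = u by rewrite mulC.
have hu3' : mul u (mul u u) = u by rewrite mulC.
have hee : mul (mul u u) (mul u u) = mul u u by rewrite jor hu3'.
have hA : mul c (mul (mul u u) c) = mul (mul u u) c *+ 2.
  have E := J2 u u c c; rewrite huc hcc mulMnr hcu in E.
  by rewrite mulC E; vlin.
have hB : mul (mul (mul u u) c) u = u.
  have E := J2 u u c u; rewrite huc hcu hu3' hu3 [mul c (mul u u)]mulC in E.
  rewrite [mul u (mul (mul u u) c)]mulC in E.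
  apply: eq_sub0; apply: (@torsion _ 2); move: E; set X := mul (mul (mul u u) c) u => E.
  apply: iota_inj; move/(congr1 (@iota _)): E; rewrite !iotaE => E.
  apply: (lc1 (k1 := 1) E); ring.
have hC : mul (mul (mul u u) c) (mul u u) = mul (mul u u) c.
  have E := J2 u u (mul u u) c; rewrite hee hu3' huc hu3 in E.
  by rewrite mulC {2}E; vlin.
split => //.
have E := J2 u u c (mul (mul u u) c).
rewrite [mul u (mul (mul u u) c)]mulC hB huc hA mulMnr [mul (mul u u) (mul (mul u u) c)]mulC hC hcu in E.
by rewrite E; vlin.
Qed.

Lemma peirce f x y : mul f f = f -> mul f x = 0 -> mul f y = y -> mul x y = 0.
Proof.
move=> hff hfx hfy.
have E1 := J2 f f x y; rewrite hff hfx hfy ?mul0l ?mul0r in E1.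
have h1 : mul f (mul x y) = 0.
  apply: iota_inj; move/(congr1 (@iota _)): E1; rewrite !iotaE => E1.
  apply: (lc1 (k1 := 1) E1); ring.
have E2 := J2 f f y x; rewrite hff hfx hfy mul0r (mulC y x) h1 ?mul0r in E2.
by rewrite E2; vlin.
Qed.

Lemma factsIII c u v : mul c c = c *+ 2 -> mul c u = u -> mul (mul u u) u = u ->
  mul c v = v -> mul (mul v v) v = v -> mul (mul v v) u = 0 ->
  [/\ mul (mul (mul u u) c) (mul (mul v v) c) = 0, mul (mul (mul u u) c) v = 0
    & mul u (mul (mul v v) c) = 0].
Proof.
move=> hcc hcu hu3 hcv hv3 hfu.
have [hA' _ _ _] := factsI hcc hcv hv3.
have hv3' : mul v (mul v v) = v by rewrite mulC.
have hff : mul (mul v v) (mul v v) = mul v v by rewrite jor hv3'.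
have huv : mul u v = 0 by apply: (peirce hff hfu hv3).
have hvu : mul v u = 0 by rewrite mulC.
have hfe : mul (mul v v) (mul u u) = 0.
  have E := J2 v v u u; rewrite hfu hvu ?mul0l ?mul0r in E.
  solve1 (-1 : te V) E.
have hev : mul (mul u u) v = 0 by apply: (peirce hff hfe hv3).
have hQu : mul (mul (mul v v) c) u = 0.
  have E := J2 v v c u; rewrite hvu hcu hfu ?mul0r ?mul0l in E.
  by rewrite E; vlin.
have hPv : mul (mul (mul u u) c) v = 0.
  have E := J2 u u c v; rewrite huv hcv hev ?mul0r ?mul0l in E.
  by rewrite E; vlin.
have heQ : mul (mul u u) (mul (mul v v) c) = 0.
  have E := J2 u u (mul v v) c.
  have hef : mul (mul u u) (mul v v) = 0 by rewrite mulC.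
  have huf : mul u (mul v v) = 0 by rewrite mulC.
  have huc : mul u c = u by rewrite mulC.
  rewrite hef huf huc hfu ?mul0l ?mul0r in E.
  solve1 (-1 : te V) E.
split => //; last by rewrite mulC.
have E := J2 u u c (mul (mul v v) c).
rewrite [mul u (mul (mul v v) c)]mulC hQu hA' mulMnr heQ ?mul0r ?mul0l in E.
by rewrite E; vlin.
Qed.
End Jordan.

Lemma half2 (R : numFieldType) : (2^-1 + 2^-1 : R) = 1.
Proof. by field. Qed.

Lemma halfV (R : numFieldType) (V : lmodType R) (x y : V) : x *+ 2 = y -> x = 2^-1 *: y.
Proof.
move=> <-; rewrite -(scaler_nat (R:=R) 2 x) scalerA.
by rewrite (_ : 2^-1 * 2%:R = 1) ?scale1r //; field.
Qed.

Theorem proposition2p4 (R : realType) (V : completeNormedModType R)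
  (mul : V -> V -> V) (one : V)
  (HV : is_unital_JB_algebra mul one) (a : V) (ha : projection mul a) :
  (forall u : V, tripotent mul u -> in_V12 mul a u ->
     let p := mul a (mul u u) in
     [/\ projection mul p, jle mul p a, in_V12 mul p u & mul p (mul u u) = p])
  /\ (forall u : V, tripotent mul u -> in_V12 mul a u -> u <> 0 ->
        mul a (mul u u) <> 0)
  /\ (forall u v : V, tripotent mul u -> tripotent mul v ->
        in_V12 mul a u -> in_V12 mul a v -> orthogonal_trip mul u v ->
        let p := mul a (mul u u) in
        let q := mul a (mul v v) in
        [/\ projection mul p, projection mul q, mul p q = 0,
            mul p v = 0 & mul u q = 0]).
Proof.
case: HV => mDl [_ [mC [jor _]]].
have mDr := @mulDr _ _ mul mDl mC.
have m0l := @mul0l _ _ mul mDl.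
have mNl := @mulNl _ _ mul mDl.
have mNr := @mulNr _ _ mul mDl mC.
have mMnl := @mulMnl _ _ mul mDl.
have mMnr := @mulMnr _ _ mul mDl mC.
have hcc : mul (a + a) (a + a) = (a + a) *+ 2.
  rewrite mDl !mDr ha; vlin.
have hcu : forall u, in_V12 mul a u -> mul (a + a) u = u.
  by move=> u hau; rewrite mDl hau -scalerDl half2 scale1r.
have hu3 : forall u, tripotent mul u -> mul (mul u u) u = u.
  by move=> u; rewrite /tripotent /triple subrr add0r.
have hP : forall u, mul (mul u u) (a + a) = mul a (mul u u) *+ 2.
  by move=> u; rewrite mDr mC mulr2n.
have partI : forall u : V, tripotent mul u -> in_V12 mul a u ->
     let p := mul a (mul u u) in
     [/\ projection mul p, jle mul p a, in_V12 mul p u & mul p (mul u u) = p].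
  move=> u hu hau p.
  have [hA hB hC hD] := factsI mDl mC jor hcc (hcu u hau) (hu3 u hu).
  rewrite hP -/p in hA hB hC hD.
  rewrite mMnl mMnr -!mulrnA in hD.
  rewrite mMnr mDl -mulr2n -!mulrnA in hA.
  rewrite mMnl in hB. rewrite mMnl in hC.
  have hpp : mul p p = p by apply: (@mulnI' _ _ _ _ 3).
  have hap : mul a p = p by apply: (@mulnI' _ _ _ _ 3).
  split => //.
  - exists (a - p).
    rewrite mDl !mDr !mNl !mNr ha hap [mul p a]mC hap hpp; vlin.
  - by rewrite /in_V12; apply: halfV.
  - by apply: (@mulnI' _ _ _ _ 1).
split => //.
split.
  move=> u hu hau hu0 hp0.
  have [_ _ hpu _] := partI u hu hau.
  move: hpu; rewrite /in_V12 hp0 m0l => /esym/eqP.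
  rewrite scaler_eq0 invr_eq0 pnatr_eq0 /= => /eqP; exact: hu0.
move=> u v hu hv hau hav huv p q.
have [hp _ _ _] := partI u hu hau.
have [hq _ _ _] := partI v hv hav.
have hfu : mul (mul v v) u = 0.
  by move: huv; rewrite /orthogonal_trip /triple (mC v u) subrr add0r.
have [h1 h2 h3] := factsIII mDl mC jor hcc (hcu u hau) (hu3 u hu) (hcu v hav) (hu3 v hv) hfu.
rewrite !hP -/p -/q in h1 h2 h3.
rewrite mMnl mMnr -mulrnA in h1.
rewrite mMnl in h2. rewrite mMnr in h3.
split => //.
- exact: (@torsion _ _ _ 3).
- exact: (@torsion _ _ _ 1).
- exact: (@torsion _ _ _ 1).
Qed.
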